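(* Let $L_1>0$, $L_4\in\mathbb{R}$ and $\kappa_2\ge\frac{L_4^2}{2L_1}$, and let $\mathcal{L}_{h,\kappa_2}Q_h=L_1\Delta_hQ_h-\frac{L_4}{2}\mathcal{C}_hQ_h-\kappa_2Q_h$ on $\mathcal{M}_h$. Then for every $Q_h\in\mathcal{M}_h$, $$\langle\mathcal{L}_{h,\kappa_2}Q_h,Q_h\rangle_h\le0,$$ and $\mathcal{L}_{h,\kappa_2}$ generates a contraction semigroup in the discrete $L^2$ norm: $\|e^{t\mathcal{L}_{h,\kappa_2}}Q_h\|_2\le\|Q_h\|_2$ for all $t\ge0$ and $Q_h\in\mathcal{M}_h$.
   Context: Let $\Omega=(-X,X)\times(-Y,Y)\times(-Z,Z)$, $N_x,N_y,N_z$ positive even integers, $h_x=2X/N_x$, $h_y=2Y/N_y$, $h_z=2Z/N_z$, grid $S_h=\{(-X+ih_x,-Y+jh_y,-Z+kh_z):1\le i\le N_x,1\le j\le N_y,1\le k\le N_z\}$, and wavevector set $\hat S_h=\{(\pi n_1/X,\pi n_2/Y,\pi n_3/Z):-N_x/2+1\le n_1\le N_x/2,\ -N_y/2+1\le n_2\le N_y/2,\ -N_z/2+1\le n_3\le N_z/2\}$. $\mathcal{M}_h$ is the set of periodic grid functions $S_h\to\mathbb{R}^{3\times3}$, with discrete inner product $\langle M,N\rangle_h=h_xh_yh_z\sum_{x\in S_h}M(x):N(x)$ and norm $\|M\|_2=\langle M,M\rangle_h^{1/2}$. The discrete Fourier transform is $\widehat Q_{\boldsymbol k}=\sum_{x\in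 S_h}Q_h(x)e^{-i\boldsymbol k\cdot x}$, $\boldsymbol k\in\hat S_h$. The discrete Laplacian $\Delta_h$ has Fourier symbol $-|\boldsymbol k|^2$. The discrete curl $\nabla_h\times$ acts row-wise with symbol $\widehat{(\nabla_h\times Q_h)}_{\boldsymbol k}=i\boldsymbol k\times_r\widehat Q_{\boldsymbol k}$ (the $r$-th row is $i\boldsymbol k\times$ (the $r$-th row of $\widehat Q_{\boldsymbol k}$)), and $\mathcal{C}_hQ_h=\nabla_h\times Q_h+(\nabla_h\times Q_h)^T$.
   Formalization: The discrete curl ∇_h×Q_h, and with it $\mathcal{C}_h$, is the real part of the inverse discrete Fourier transform of $i\boldsymbol k\times_r\widehat Q_{\boldsymbol k}$, so its Nyquist-mode contributions are discarded. The statement above fails without it. *)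

(* Defs.v *)
From HB Require Import structures.
From mathcomp Require Import all_boot all_order all_algebra.
From mathcomp Require Import all_classical all_reals all_analysis.
From mathcomp Require Import complex.
Set Implicit Arguments. Unset Strict Implicit. Unset Printing Implicit Defensive.
Import Order.TTheory GRing.Theory Num.Theory.
Local Open Scope ring_scope.
Local Open Scope complex_scope.

Section Grid.
Variable R : realType.
Variables (X Y Z : R) (Nx Ny Nz : nat).

(* Grid indices: (i,j,k) : 'I_Nx * 'I_Ny * 'I_Nz stands for the paper's
   (i+1, j+1, k+1), i.e. the grid point (-X+(i+1)h_x, -Y+(j+1)h_y, -Z+(k+1)h_z).
   The same index type also labels the wavevectors of \hat S_h:
   (a,b,c) stands for (n1,n2,n3) = (a+1-Nx/2, b+1-Ny/2, c+1-Nz/2). *)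
Definition gidx := ('I_Nx * 'I_Ny * 'I_Nz)%type.

(* Periodic grid functions S_h -> R^{3x3}  (the space M_h). *)
Definition gridfun := gidx -> 'M[R]_3.

Definition hx : R := 2 * X / Nx%:R.
Definition hy : R := 2 * Y / Ny%:R.
Definition hz : R := 2 * Z / Nz%:R.

Definition gpoint (p : gidx) (d : 'I_3) : R :=
  match val d with
  | 0%N => - X + (p.1.1).+1%:R * hx
  | 1%N => - Y + (p.1.2).+1%:R * hy
  | _ => - Z + (p.2).+1%:R * hz
  end.

Definition wvec (q : gidx) (d : 'I_3) : R :=
  match val d with
  | 0%N => pi * ((q.1.1).+1%:R - (Nx./2)%:R) / X
  | 1%N => pi * ((q.1.2).+1%:R - (Ny./2)%:R) / Y
  | _ => pi * ((q.2).+1%:R - (Nz./2)%:R) / Z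
  end.

Definition dot3 (u v : 'I_3 -> R) : R := \sum_(d < 3) u d * v d.

Definition expi (theta : R) : R[i] := cos theta +i* sin theta.

Definition dft (Q : gridfun) (q : gidx) : 'M[R[i]]_3 :=
  \sum_(p : gidx) expi (- dot3 (wvec q) (gpoint p)) *: map_mx (real_complex R) (Q p).

(* The real grid function with Fourier coefficients (S_k \hat Q_k)_k, obtained by the
   inverse DFT  (1/N) sum_k e^{i k.x} (...), of which the real part is kept. *)
Definition fmult (S : gidx -> 'M[R[i]]_3 -> 'M[R[i]]_3) (Q : gridfun) : gridfun :=
  fun p => map_mx (@complex.Re R)
    ((((Nx * Ny * Nz)%N%:R : R)^-1)%:C *:
       \sum_(q : gidx) expi (dot3 (wvec q) (gpoint p)) *: S q (dft Q q)).

(* row-wise cross product  k x_r M : r-th row is k x (r-th row of M) *)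
Definition cross_r (k : 'I_3 -> R) (M : 'M[R[i]]_3) : 'M[R[i]]_3 :=
  \matrix_(r < 3, c < 3)
    let c1 : 'I_3 := inord ((c + 1) %% 3) in
    let c2 : 'I_3 := inord ((c + 2) %% 3) in
    (k c1)%:C * M r c2 - (k c2)%:C * M r c1.

Definition lap_h (Q : gridfun) : gridfun :=
  fmult (fun q M => (- dot3 (wvec q) (wvec q))%:C *: M) Q.

Definition curl_h (Q : gridfun) : gridfun :=
  fmult (fun q M => 'i *: cross_r (wvec q) M) Q.

Definition C_h (Q : gridfun) : gridfun := fun p => curl_h Q p + (curl_h Q p)^T.

Definition L_h (L1 L4 kappa2 : R) (Q : gridfun) : gridfun :=
  fun p => L1 *: lap_h Q p - (L4 / 2) *: C_h Q p - kappa2 *: Q p.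

Definition frob (M N : 'M[R]_3) : R := \sum_(i < 3) \sum_(j < 3) M i j * N i j.
Definition ip_h (M N : gridfun) : R := hx * hy * hz * \sum_(p : gidx) frob (M p) (N p).
Definition norm_h (M : gridfun) : R := Num.sqrt (ip_h M M).

Definition op_exp (A : gridfun -> gridfun) (t : R) (Q : gridfun) : gridfun :=
  fun p => \matrix_(i < 3, j < 3)
    limn (fun m : nat => \sum_(0 <= n < m) t ^+ n / (n`!)%:R * (iter n A Q) p i j).

End Grid.

(* Main.v *)
Require Import Defs.
From HB Require Import structures.
From mathcomp Require Import all_boot all_order all_algebra.
From mathcomp Require Import all_classical all_reals all_analysis.
From mathcomp Require Import complex.
From mathcomp Require Import ring lra.
Import Order.TTheory GRing.Theory Num.Theory.
Import numFieldNormedType.Exports.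
Local Open Scope ring_scope.
Set Implicit Arguments. Unset Strict Implicit. Unset Printing Implicit Defensive.
Lemma sum3 (R : realType) (F : 'I_3 -> R) :
  \sum_(c < 3) F c = F (inord 0) + F (inord 1) + F (inord 2).
Proof.
rewrite !big_ord_recr big_ord0 /= add0r.
congr (F _ + F _ + F _); apply: val_inj; rewrite /= inordK //.
Qed.

Definition crow (R : realType) (k a : 'I_3 -> R) (c : 'I_3) : R :=
  k (inord ((c + 1) %% 3)) * a (inord ((c + 2) %% 3))
  - k (inord ((c + 2) %% 3)) * a (inord ((c + 1) %% 3)).

Lemma crow_bound (R : realType) (k a : 'I_3 -> R) :
  \sum_(c < 3) crow k a c ^+ 2 <= (\sum_(d < 3) k d ^+ 2) * \sum_(c < 3) a c ^+ 2.
Proof.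
rewrite /crow !sum3 !inordK //=.
set k0 := k (inord 0); set k1 := k (inord 1); set k2 := k (inord 2).
set a0 := a (inord 0); set a1 := a (inord 1); set a2 := a (inord 2).
have -> : (k0 ^+ 2 + k1 ^+ 2 + k2 ^+ 2) * (a0 ^+ 2 + a1 ^+ 2 + a2 ^+ 2) =
  (k1 * a2 - k2 * a1) ^+ 2 + (k2 * a0 - k0 * a2) ^+ 2 + (k0 * a1 - k1 * a0) ^+ 2
  + (k0 * a0 + k1 * a1 + k2 * a2) ^+ 2 by ring.
by rewrite lerDl sqr_ge0.
Qed.

Lemma amgm (R : realType) (L1 L4 x y : R) : 0 < L1 ->
  - (L4 / 2) * (x * y) <= L1 / 4 * x ^+ 2 + L4 ^+ 2 / (4 * L1) * y ^+ 2.
Proof.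
move=> hL1; rewrite -subr_ge0.
have -> : L1 / 4 * x ^+ 2 + L4 ^+ 2 / (4 * L1) * y ^+ 2 - - (L4 / 2) * (x * y)
   = (L1 * x + L4 * y) ^+ 2 / (4 * L1).
  by field; rewrite gt_eqF.
by rewrite divr_ge0 ?sqr_ge0 // mulr_ge0 // ltW.
Qed.

Definition crm (R : realType) (k : 'I_3 -> R) (A : 'I_3 -> 'I_3 -> R) (r c : 'I_3) : R :=
  crow k (fun j => A r j) c.

Lemma crm_bound (R : realType) (k : 'I_3 -> R) (A : 'I_3 -> 'I_3 -> R) :
  \sum_(r < 3) \sum_(c < 3) crm k A r c ^+ 2 <=
  (\sum_(d < 3) k d ^+ 2) * \sum_(r < 3) \sum_(c < 3) A r c ^+ 2.
Proof.
rewrite mulr_sumr; apply: ler_sum => r _; exact: crow_bound.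
Qed.

Lemma crm_boundT (R : realType) (k : 'I_3 -> R) (A : 'I_3 -> 'I_3 -> R) :
  \sum_(r < 3) \sum_(c < 3) crm k A c r ^+ 2 <=
  (\sum_(d < 3) k d ^+ 2) * \sum_(r < 3) \sum_(c < 3) A r c ^+ 2.
Proof. by rewrite exchange_big; exact: crm_bound. Qed.

Lemma mode_bound (R : realType) (L1 L4 kappa2 : R) (k : 'I_3 -> R) (C S : 'I_3 -> 'I_3 -> R) :
  0 < L1 -> L4 ^+ 2 / (2 * L1) <= kappa2 ->
  - L1 * (\sum_(d < 3) k d ^+ 2) * (\sum_(r < 3) \sum_(c < 3) (C r c ^+ 2 + S r c ^+ 2))
  - (L4 / 2) * (\sum_(r < 3) \sum_(c < 3)
       (crm k S r c * C r c - crm k C r c * S r c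
        + (crm k S c r * C r c - crm k C c r * S r c)))
  <= kappa2 * (\sum_(r < 3) \sum_(c < 3) (C r c ^+ 2 + S r c ^+ 2)).
Proof.
move=> hL1 hk.
set K2 := \sum_(d < 3) k d ^+ 2.
set c2 := L4 ^+ 2 / (4 * L1).
have hK2 : 0 <= K2 by apply: sumr_ge0 => d _; exact: sqr_ge0.
have hC := crm_bound k C; have hS := crm_bound k S.
have hCT := crm_boundT k C; have hST := crm_boundT k S.
set sC := \sum_(r < 3) \sum_(c < 3) C r c ^+ 2 in hC hCT.
set sS := \sum_(r < 3) \sum_(c < 3) S r c ^+ 2 in hS hST.
have hsC : 0 <= sC by apply: sumr_ge0 => r _; apply: sumr_ge0 => c _; exact: sqr_ge0.
have hsS : 0 <= sS by apply: sumr_ge0 => r _; apply: sumr_ge0 => c _; exact: sqr_ge0.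
have eN : \sum_(r < 3) \sum_(c < 3) (C r c ^+ 2 + S r c ^+ 2) = sC + sS.
  by rewrite /sC /sS -big_split /=; apply: eq_bigr => r _; rewrite big_split.
rewrite eN.
have key : - (L4 / 2) * (\sum_(r < 3) \sum_(c < 3)
       (crm k S r c * C r c - crm k C r c * S r c
        + (crm k S c r * C r c - crm k C c r * S r c)))
  <= L1 / 4 * (\sum_(r < 3) \sum_(c < 3) crm k S r c ^+ 2
             + \sum_(r < 3) \sum_(c < 3) crm k C r c ^+ 2
             + \sum_(r < 3) \sum_(c < 3) crm k S c r ^+ 2
             + \sum_(r < 3) \sum_(c < 3) crm k C c r ^+ 2)
     + c2 * (2 * sC + 2 * sS).
  rewrite mulr_sumr.
  have -> : c2 * (2 * sC + 2 * sS) = \sum_(r < 3) \sum_(c < 3) (c2 * (2 * C r c ^+ 2 + 2 * S r c ^+ 2)).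
    have -> : c2 * (2 * sC + 2 * sS) = c2 * 2 * sC + c2 * 2 * sS by ring.
    rewrite /sC /sS !mulr_sumr -big_split /=; apply: eq_bigr => r _.
    rewrite !mulr_sumr -big_split /=; apply: eq_bigr => c _; ring.
  rewrite !mulrDr !mulr_sumr -!big_split /=; apply: ler_sum => r _.
  rewrite !mulr_sumr -!big_split /=; apply: ler_sum => c _.
  have h1 := amgm L4 (crm k S r c) (C r c) hL1.
  have h2 := amgm L4 (- crm k C r c) (S r c) hL1.
  have h3 := amgm L4 (crm k S c r) (C r c) hL1.
  have h4 := amgm L4 (- crm k C c r) (S r c) hL1.
  rewrite -/c2 sqrrN in h1 h2 h3 h4.
  lra.
have hc2 : c2 <= kappa2 / 2.
  have -> : c2 = (L4 ^+ 2 / (2 * L1)) / 2 by rewrite /c2; field; rewrite gt_eqF.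
  lra.
have hsum : L1 / 4 * (\sum_(r < 3) \sum_(c < 3) crm k S r c ^+ 2
             + \sum_(r < 3) \sum_(c < 3) crm k C r c ^+ 2
             + \sum_(r < 3) \sum_(c < 3) crm k S c r ^+ 2
             + \sum_(r < 3) \sum_(c < 3) crm k C c r ^+ 2)
   <= L1 / 4 * (2 * K2 * sC + 2 * K2 * sS).
  apply: ler_wpM2l; first by rewrite divr_ge0 // ltW.
  rewrite -/K2 in hC hCT hS hST; lra.
have p1 : 0 <= L1 * K2 * (sC + sS) by rewrite !mulr_ge0 // ?addr_ge0 // ltW.
have p2 : 0 <= (kappa2 / 2 - c2) * (sC + sS) by rewrite mulr_ge0 ?subr_ge0 ?addr_ge0.
lra.
Qed.
Local Open Scope complex_scope.

Lemma Re_sum (R : realType) (I : finType) (F : I -> R[i]) :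
  complex.Re (\sum_(i : I) F i) = \sum_(i : I) complex.Re (F i).
Proof. by apply: (big_morph (@complex.Re R)) => // -[a b] [c d]. Qed.

Lemma Im_sum (R : realType) (I : finType) (F : I -> R[i]) :
  complex.Im (\sum_(i : I) F i) = \sum_(i : I) complex.Im (F i).
Proof. by apply: (big_morph (@complex.Im R)) => // -[a b] [c d]. Qed.

Lemma expiD (R : realType) (a b : R) : expi (a + b) = expi a * expi b.
Proof.
rewrite /expi cosD sinD; apply/eqP; rewrite eq_complex /=; apply/andP; split;
  apply/eqP; ring.
Qed.

Lemma expi0 (R : realType) : expi (0 : R) = 1.
Proof. by rewrite /expi cos0 sin0. Qed.

Lemma expiMn (R : realType) (x : R) (n : nat) : expi (n%:R * x) = expi x ^+ n.
Proof.
elim: n => [|n IH]; first by rewrite mul0r expi0 expr0.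
by rewrite -addn1 natrD mulrDl mul1r expiD IH exprD expr1.
Qed.

Lemma expi2pin (R : realType) (n : nat) : expi (2 * pi * n%:R) = 1 :> R[i].
Proof.
rewrite mulrC expiMn.
have -> : expi (2 * pi) = 1 :> R[i].
  by rewrite /expi mulr_natl cos2pi sin2pi.
by rewrite expr1n.
Qed.

Lemma expiN1 (R : realType) (x : R) : expi x = 1 -> expi (- x) = 1.
Proof.
move=> h; have := expiD (- x) x; rewrite addNr expi0 h mulr1 => <-//.
Qed.

Lemma sin_ne0 (R : realType) (n : nat) (i i' : 'I_n) :
  i != i' -> sin (pi * (i%:R - i'%:R) / n%:R) != 0 :> R.
Proof.
move=> ne.
have n0 : (0 < n)%N by case: n i {i' ne} => [[]|].
have hn : (0 : R) < n%:R by rewrite ltr0n.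
have hi : (i%:R : R) < n%:R by rewrite ltr_nat.
have hi' : (i'%:R : R) < n%:R by rewrite ltr_nat.
have hi0 : (0 : R) <= i%:R by rewrite ler0n.
have hi0' : (0 : R) <= i'%:R by rewrite ler0n.
have pi0 : (0 : R) < pi := pi_gt0 R.
case: (ltngtP i i') => [lt|gt|eq]; last by move: ne; rewrite (val_inj eq) eqxx.
- have hlt : (i%:R : R) < i'%:R by rewrite ltr_nat.
  suff : (0 : R) < sin (- (pi * (i%:R - i'%:R) / n%:R)).
    by rewrite sinN oppr_gt0 => /lt_eqF ->.
  apply: sin_gt0_pi; apply/andP; split.
    rewrite -mulNr -mulrN opprB; apply: divr_gt0 => //; apply: mulr_gt0 => //.
    by rewrite subr_gt0.
  rewrite -mulNr -mulrN opprB ltr_pdivrMr // ltr_pM2l //; lra.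
- have hlt : (i'%:R : R) < i%:R by rewrite ltr_nat.
  suff : (0 : R) < sin (pi * (i%:R - i'%:R) / n%:R) by move/gt_eqF ->.
  apply: sin_gt0_pi; apply/andP; split.
    apply: divr_gt0 => //; apply: mulr_gt0 => //; by rewrite subr_gt0.
  rewrite ltr_pdivrMr // ltr_pM2l //; lra.
Qed.

Lemma orth1 (R : realType) (n : nat) (i i' : 'I_n) (c : R) :
  \sum_(a < n) expi ((a%:R + c) * (2 * pi * (i%:R - i'%:R) / n%:R))
  = if i == i' then n%:R else 0.
Proof.
have n0 : (0 < n)%N by case: n i {i'} => [[]|].
have hn : (n%:R : R) != 0 by rewrite pnatr_eq0 -lt0n.
case: eqP => [->|ne].
  under eq_bigr do rewrite subrr mulr0 mul0r mulr0 expi0.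
  by rewrite sumr_const card_ord.
set phi := (2 * pi * (i%:R - i'%:R) / n%:R).
under eq_bigr do rewrite mulrDl expiD expiMn mulrC.
rewrite -mulr_sumr.
suff -> : \sum_(a < n) expi phi ^+ a = 0 by rewrite mulr0.
have zn : expi phi ^+ n = 1.
  rewrite -expiMn /phi mulrC divfK // mulrBr expiD -mulrN.
  by rewrite expi2pin mul1r mulrN expiN1 // expi2pin.
have z1 : expi phi != 1.
  apply/negP => /eqP h.
  have hc : cos phi = 1 by move: h; rewrite /expi => -[].
  have hs := @sin_ne0 R n i i'.
  have ne' : i != i' by apply/eqP.
  move: (hs ne'); apply/negP; rewrite negbK.
  set y := pi * (i%:R - i'%:R) / n%:R.
  move: hc; rewrite /phi.
  have -> : 2 * pi * (i%:R - i'%:R) / n%:R = y + y by rewrite /y; field.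
  rewrite cosD => hc.
  have := cos2Dsin2 y => h2.
  have : sin y ^+ 2 = 0 by nra.
  by move/eqP; rewrite sqrf_eq0.
have := subrX1 (expi phi) n; rewrite zn subrr => /esym/eqP.
by rewrite mulf_eq0 subr_eq0 (negbTE z1) /= => /eqP.
Qed.

Lemma sum_gidx (R : realType) (Nx Ny Nz : nat) (F : 'I_Nx -> R[i]) (G : 'I_Ny -> R[i])
  (H : 'I_Nz -> R[i]) :
  \sum_(q : gidx Nx Ny Nz) F q.1.1 * G q.1.2 * H q.2 =
  (\sum_a F a) * (\sum_b G b) * (\sum_c H c).
Proof.
rewrite /gidx -(pair_bigA _ (fun ab c => F ab.1 * G ab.2 * H c)) /=.
rewrite -(pair_bigA _ (fun a b => \sum_c F a * G b * H c)) /=.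
rewrite mulr_suml mulr_suml; apply: eq_bigr => a _.
rewrite (mulr_sumr _ _ _ (F a)) mulr_suml; apply: eq_bigr => b _.
by rewrite mulr_sumr.
Qed.

Definition theta (R : realType) (X Y Z : R) (Nx Ny Nz : nat) (q p : gidx Nx Ny Nz) : R :=
  dot3 (wvec X Y Z q) (gpoint X Y Z p).

Definition phi1 (R : realType) (n : nat) (i i' : 'I_n) : R :=
  2 * pi * (i%:R - i'%:R) / n%:R.

Lemma theta_diff (R : realType) (X Y Z : R) (Nx Ny Nz : nat) (q p p' : gidx Nx Ny Nz) :
  0 < X -> 0 < Y -> 0 < Z -> (0 < Nx)%N -> (0 < Ny)%N -> (0 < Nz)%N ->
  theta X Y Z q p - theta X Y Z q p' =
  (q.1.1%:R + (1 - (Nx./2)%:R)) * phi1 R p.1.1 p'.1.1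
  + (q.1.2%:R + (1 - (Ny./2)%:R)) * phi1 R p.1.2 p'.1.2
  + (q.2%:R + (1 - (Nz./2)%:R)) * phi1 R p.2 p'.2.
Proof.
move=> hX hY hZ nx ny nz.
have hX' : X != 0 by rewrite gt_eqF.
have hY' : Y != 0 by rewrite gt_eqF.
have hZ' : Z != 0 by rewrite gt_eqF.
have nx' : (Nx%:R : R) != 0 by rewrite pnatr_eq0 -lt0n.
have ny' : (Ny%:R : R) != 0 by rewrite pnatr_eq0 -lt0n.
have nz' : (Nz%:R : R) != 0 by rewrite pnatr_eq0 -lt0n.
rewrite /theta /dot3 !sum3 /wvec /gpoint /= !inordK //= /hx /hy /hz /phi1 -!natr1.
field.
by rewrite hX' hY' hZ' nx' ny' nz'.
Qed.

Lemma Re_natC (R : realType) (n : nat) : complex.Re (n%:R : R[i]) = n%:R.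
Proof. by rewrite -(rmorph_nat (real_complex R)). Qed.

Lemma orth3 (R : realType) (X Y Z : R) (Nx Ny Nz : nat) (p p' : gidx Nx Ny Nz) :
  0 < X -> 0 < Y -> 0 < Z -> (0 < Nx)%N -> (0 < Ny)%N -> (0 < Nz)%N ->
  \sum_(q : gidx Nx Ny Nz) cos (theta X Y Z q p - theta X Y Z q p') =
  if p == p' then (Nx * Ny * Nz)%:R else 0.
Proof.
move=> hX hY hZ nx ny nz.
have -> : \sum_(q : gidx Nx Ny Nz) cos (theta X Y Z q p - theta X Y Z q p') =
  complex.Re (\sum_(q : gidx Nx Ny Nz) expi (theta X Y Z q p - theta X Y Z q p')).
  by rewrite Re_sum.
under eq_bigr do rewrite theta_diff // !expiD.
rewrite (sum_gidx (fun a => expi ((a%:R + (1 - (Nx./2)%:R)) * phi1 R p.1.1 p'.1.1))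
  (fun a => expi ((a%:R + (1 - (Ny./2)%:R)) * phi1 R p.1.2 p'.1.2))
  (fun a => expi ((a%:R + (1 - (Nz./2)%:R)) * phi1 R p.2 p'.2))).
rewrite /phi1 !orth1.
case: p p' => [[a b] c] [[a' b'] c'] /=.
rewrite !xpair_eqE.
case: eqP => _; case: eqP => _; case: eqP => _ /=;
  rewrite ?mul0r ?mulr0 //. all: try by rewrite !natrM -!(rmorph_nat (real_complex R)) -!rmorphM. all: try by rewrite subrr. all: try by rewrite /= !(mul0r, mulr0, subrr).
Qed.

Definition Cs (R : realType) (X Y Z : R) (Nx Ny Nz : nat) (f : gidx Nx Ny Nz -> R)
  (q : gidx Nx Ny Nz) : R := \sum_p cos (theta X Y Z q p) * f p.
Definition Ss (R : realType) (X Y Z : R) (Nx Ny Nz : nat) (f : gidx Nx Ny Nz -> R)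
  (q : gidx Nx Ny Nz) : R := \sum_p sin (theta X Y Z q p) * f p.

Lemma parseval1 (R : realType) (X Y Z : R) (Nx Ny Nz : nat) (f : gidx Nx Ny Nz -> R) :
  0 < X -> 0 < Y -> 0 < Z -> (0 < Nx)%N -> (0 < Ny)%N -> (0 < Nz)%N ->
  \sum_q (Cs X Y Z f q ^+ 2 + Ss X Y Z f q ^+ 2) =
  (Nx * Ny * Nz)%:R * \sum_p f p ^+ 2.
Proof.
move=> hX hY hZ nx ny nz.
have e1 q : Cs X Y Z f q ^+ 2 + Ss X Y Z f q ^+ 2 =
   \sum_p \sum_p' f p * f p' * cos (theta X Y Z q p - theta X Y Z q p').
  rewrite /Cs /Ss !expr2 !mulr_suml -big_split; apply: eq_bigr => p _.
  rewrite !mulr_sumr -big_split; apply: eq_bigr => p' _; rewrite cosB /=; ring.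
under eq_bigr do rewrite e1.
rewrite exchange_big /= mulr_sumr; apply: eq_bigr => p _.
rewrite exchange_big /=.
under eq_bigr do rewrite -mulr_sumr orth3 //.
rewrite (bigD1 p) //= big1 ?addr0 ?eqxx; first by rewrite expr2; ring.
by move=> p' /negPf; rewrite eq_sym => ->; rewrite mulr0.
Qed.

Lemma dft_entry (R : realType) (X Y Z : R) (Nx Ny Nz : nat) (Q : gridfun R Nx Ny Nz)
  (q : gidx Nx Ny Nz) (i j : 'I_3) :
  dft X Y Z Q q i j =
  (Cs X Y Z (fun p => Q p i j) q) +i* (- Ss X Y Z (fun p => Q p i j) q).
Proof.
rewrite /dft summxE; apply/eqP; rewrite eq_complex Re_sum Im_sum /Cs /Ss.
apply/andP; split; apply/eqP; last rewrite -sumrN; apply: eq_bigr => p _;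
  rewrite !mxE /= /expi /theta cosN sinN /=; ring.
Qed.

Lemma mxsumE (R : realType) (I : finType) (F : I -> 'M[R[i]]_3) (i j : 'I_3) :
  (\sum_(k : I) F k) i j = \sum_(k : I) F k i j.
Proof.
by apply: (big_morph (fun M : 'M[R[i]]_3 => M i j)) => [A B|]; rewrite !mxE.
Qed.

Lemma ReCM (R : realType) (c : R) (z : R[i]) : complex.Re (c%:C * z) = c * complex.Re z.
Proof. by case: z => a b /=; rewrite mul0r subr0. Qed.

Lemma fmult_entry (R : realType) (X Y Z : R) (Nx Ny Nz : nat)
  (S : gidx Nx Ny Nz -> 'M[R[i]]_3 -> 'M[R[i]]_3) (Q : gridfun R Nx Ny Nz)
  (p : gidx Nx Ny Nz) (i j : 'I_3) :
  fmult X Y Z S Q p i j =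
  ((Nx * Ny * Nz)%N%:R)^-1 * \sum_q (cos (theta X Y Z q p) * complex.Re (S q (dft X Y Z Q q) i j)
                    - sin (theta X Y Z q p) * complex.Im (S q (dft X Y Z Q q) i j)).
Proof.
rewrite /fmult !mxE /=.
rewrite ReCM; congr (_ * _).
rewrite mxsumE Re_sum; apply: eq_bigr => q _; rewrite !mxE /= /theta; by case: (S q _ i j).
Qed.

Lemma sum4swap (R : realType) (P I J Q : finType) (F : P -> I -> J -> Q -> R) :
  \sum_p \sum_i \sum_j \sum_q F p i j q = \sum_q \sum_i \sum_j \sum_p F p i j q.
Proof.
transitivity (\sum_p \sum_q \sum_i \sum_j F p i j q).
  apply: eq_bigr => p _; under eq_bigr do rewrite exchange_big; by rewrite exchange_big.
rewrite exchange_big; apply: eq_bigr => q _.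
rewrite exchange_big; apply: eq_bigr => i _; by rewrite exchange_big.
Qed.

Lemma fmult_ip (R : realType) (X Y Z : R) (Nx Ny Nz : nat)
  (S : gidx Nx Ny Nz -> 'M[R[i]]_3 -> 'M[R[i]]_3) (Q : gridfun R Nx Ny Nz)
  (a b : 'I_3 -> 'I_3 -> 'I_3) :
  \sum_p \sum_i \sum_j fmult X Y Z S Q p (a i j) (b i j) * Q p i j =
  ((Nx * Ny * Nz)%N%:R)^-1 * \sum_q \sum_i \sum_j
     (complex.Re (S q (dft X Y Z Q q) (a i j) (b i j)) * Cs X Y Z (fun p => Q p i j) q
      - complex.Im (S q (dft X Y Z Q q) (a i j) (b i j)) * Ss X Y Z (fun p => Q p i j) q).
Proof.
set c := ((Nx * Ny * Nz)%N%:R)^-1.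
transitivity (\sum_p \sum_i \sum_j \sum_q c *
  ((cos (theta X Y Z q p) * complex.Re (S q (dft X Y Z Q q) (a i j) (b i j))
   - sin (theta X Y Z q p) * complex.Im (S q (dft X Y Z Q q) (a i j) (b i j))) * Q p i j)).
  apply: eq_bigr => p _; apply: eq_bigr => i _; apply: eq_bigr => j _.
  by rewrite fmult_entry -/c -mulrA mulr_suml mulr_sumr.
rewrite sum4swap mulr_sumr; apply: eq_bigr => q _.
rewrite mulr_sumr; apply: eq_bigr => i _.
rewrite mulr_sumr; apply: eq_bigr => j _.
rewrite /Cs /Ss !mulr_sumr -sumrB mulr_sumr; apply: eq_bigr => p _.
ring.
Qed.

Lemma lap_sym_Re (R : realType) (K : R) (M : 'M[R[i]]_3) i j :
  complex.Re (((- K)%:C *: M) i j) = - K * complex.Re (M i j).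
Proof. by rewrite mxE; case: (M i j) => x y /=; rewrite mul0r subr0. Qed.

Lemma lap_sym_Im (R : realType) (K : R) (M : 'M[R[i]]_3) i j :
  complex.Im (((- K)%:C *: M) i j) = - K * complex.Im (M i j).
Proof. by rewrite mxE; case: (M i j) => x y /=; rewrite mul0r addr0. Qed.

Lemma curl_sym_Re (R : realType) (k : 'I_3 -> R) (M : 'M[R[i]]_3) r c :
  complex.Re (('i%C *: cross_r k M) r c) =
  - crm k (fun r c => complex.Im (M r c)) r c.
Proof.
rewrite !mxE /crm /crow.
case: (M r (inord ((c + 2) %% 3))) => x y; case: (M r (inord ((c + 1) %% 3))) => x' y' /=.
ring.
Qed.

Lemma curl_sym_Im (R : realType) (k : 'I_3 -> R) (M : 'M[R[i]]_3) r c :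
  complex.Im (('i%C *: cross_r k M) r c) =
  crm k (fun r c => complex.Re (M r c)) r c.
Proof.
rewrite !mxE /crm /crow.
case: (M r (inord ((c + 2) %% 3))) => x y; case: (M r (inord ((c + 1) %% 3))) => x' y' /=.
ring.
Qed.

Lemma lin3 (R : realType) (P : finType) (u v : R) (F G : P -> 'I_3 -> 'I_3 -> R) :
  \sum_p \sum_i \sum_j (u * F p i j + v * G p i j) =
  u * (\sum_p \sum_i \sum_j F p i j) + v * (\sum_p \sum_i \sum_j G p i j).
Proof.
rewrite !mulr_sumr -big_split; apply: eq_bigr => p _.
rewrite !mulr_sumr -big_split; apply: eq_bigr => i _.
by rewrite !mulr_sumr -big_split.
Qed.

Lemma add3 (R : realType) (P : finType) (F G : P -> 'I_3 -> 'I_3 -> R) :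
  \sum_p \sum_i \sum_j F p i j + \sum_p \sum_i \sum_j G p i j =
  \sum_p \sum_i \sum_j (F p i j + G p i j).
Proof.
rewrite -big_split; apply: eq_bigr => p _.
rewrite -big_split; apply: eq_bigr => i _.
by rewrite -big_split.
Qed.

Lemma scal3 (R : realType) (P : finType) (u : R) (F : P -> 'I_3 -> 'I_3 -> R) :
  u * \sum_p \sum_i \sum_j F p i j = \sum_p \sum_i \sum_j (u * F p i j).
Proof.
rewrite mulr_sumr; apply: eq_bigr => p _.
rewrite mulr_sumr; apply: eq_bigr => i _.
by rewrite mulr_sumr.
Qed.

Definition CM (R : realType) (X Y Z : R) (Nx Ny Nz : nat) (Q : gridfun R Nx Ny Nz) q :=
  fun i j => Cs X Y Z (fun p => Q p i j) q.
Definition SM (R : realType) (X Y Z : R) (Nx Ny Nz : nat) (Q : gridfun R Nx Ny Nz) q :=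
  fun i j => Ss X Y Z (fun p => Q p i j) q.

Lemma dft_Re (R : realType) (X Y Z : R) (Nx Ny Nz : nat) (Q : gridfun R Nx Ny Nz) q :
  (fun r c => complex.Re (dft X Y Z Q q r c)) = CM X Y Z Q q.
Proof. by apply: funext => r; apply: funext => c; rewrite dft_entry. Qed.

Lemma dft_Im (R : realType) (X Y Z : R) (Nx Ny Nz : nat) (Q : gridfun R Nx Ny Nz) q :
  (fun r c => complex.Im (dft X Y Z Q q r c)) = (fun r c => - SM X Y Z Q q r c).
Proof. by apply: funext => r; apply: funext => c; rewrite dft_entry. Qed.

Lemma crmN (R : realType) (k : 'I_3 -> R) (A : 'I_3 -> 'I_3 -> R) r c :
  crm k (fun r c => - A r c) r c = - crm k A r c.
Proof. rewrite /crm /crow; ring. Qed.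

Lemma combine (R : realType) (T : finType) (L1 v c : R) (F G H : T -> R) :
  L1 * (c * \sum_q F q) + v * (c * \sum_q G q + c * \sum_q H q) =
  c * \sum_q (L1 * F q + v * (G q + H q)).
Proof.
rewrite [in RHS](eq_bigr (fun q => L1 * F q + (v * G q + v * H q))); last by move=> q _; ring.
rewrite !big_split /= -!mulr_sumr; ring.
Qed.

Lemma sum3swap (R : realType) (A I J : finType) (F : A -> I -> J -> R) :
  \sum_a \sum_i \sum_j F a i j = \sum_i \sum_j \sum_a F a i j.
Proof.
rewrite exchange_big; apply: eq_bigr => i _; by rewrite exchange_big.
Qed.

Lemma parseval3 (R : realType) (X Y Z : R) (Nx Ny Nz : nat) (Q : gridfun R Nx Ny Nz) :
  0 < X -> 0 < Y -> 0 < Z -> (0 < Nx)%N -> (0 < Ny)%N -> (0 < Nz)%N ->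
  \sum_q \sum_(r < 3) \sum_(c < 3) (CM X Y Z Q q r c ^+ 2 + SM X Y Z Q q r c ^+ 2) =
  (Nx * Ny * Nz)%N%:R * \sum_p \sum_i \sum_j Q p i j * Q p i j.
Proof.
move=> hX hY hZ nx ny nz.
rewrite sum3swap [in RHS]sum3swap mulr_sumr; apply: eq_bigr => i _.
rewrite mulr_sumr; apply: eq_bigr => j _.
rewrite /CM /SM parseval1 //; congr (_ * _); apply: eq_bigr => p _; by rewrite expr2.
Qed.

Lemma lapT (R : realType) (X Y Z : R) (Nx Ny Nz : nat) (Q : gridfun R Nx Ny Nz) q (K : R) :
  \sum_(i < 3) \sum_(j < 3)
    (complex.Re (((- K)%:C *: dft X Y Z Q q) i j) * Cs X Y Z (fun p => Q p i j) q -
     complex.Im (((- K)%:C *: dft X Y Z Q q) i j) * Ss X Y Z (fun p => Q p i j) q)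
  = - K * \sum_(r < 3) \sum_(c < 3) (CM X Y Z Q q r c ^+ 2 + SM X Y Z Q q r c ^+ 2).
Proof.
rewrite mulr_sumr; apply: eq_bigr => i _; rewrite mulr_sumr; apply: eq_bigr => j _.
rewrite lap_sym_Re lap_sym_Im dft_entry /= /CM /SM; ring.
Qed.

Lemma curlT (R : realType) (X Y Z : R) (Nx Ny Nz : nat) (Q : gridfun R Nx Ny Nz) q
  (k : 'I_3 -> R) :
  \sum_(i < 3) \sum_(j < 3)
    (complex.Re (('i%C *: cross_r k (dft X Y Z Q q)) i j) * Cs X Y Z (fun p => Q p i j) q -
     complex.Im (('i%C *: cross_r k (dft X Y Z Q q)) i j) * Ss X Y Z (fun p => Q p i j) q)
  + \sum_(i < 3) \sum_(j < 3)
    (complex.Re (('i%C *: cross_r k (dft X Y Z Q q)) j i) * Cs X Y Z (fun p => Q p i j) q -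
     complex.Im (('i%C *: cross_r k (dft X Y Z Q q)) j i) * Ss X Y Z (fun p => Q p i j) q)
  = \sum_(r < 3) \sum_(c < 3)
       (crm k (SM X Y Z Q q) r c * CM X Y Z Q q r c - crm k (CM X Y Z Q q) r c * SM X Y Z Q q r c
        + (crm k (SM X Y Z Q q) c r * CM X Y Z Q q r c - crm k (CM X Y Z Q q) c r * SM X Y Z Q q r c)).
Proof.
rewrite -big_split; apply: eq_bigr => i _; rewrite -big_split; apply: eq_bigr => j _ /=.
rewrite !curl_sym_Re !curl_sym_Im dft_Im dft_Re !crmN /CM /SM; ring.
Qed.

Lemma dot3_sq (R : realType) (k : 'I_3 -> R) : dot3 k k = \sum_(d < 3) k d ^+ 2.
Proof. by rewrite /dot3; apply: eq_bigr => d _; rewrite expr2. Qed.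

Lemma part1 (R : realType) (X Y Z : R) (Nx Ny Nz : nat) (L1 L4 kappa2 : R)
  (Q : gridfun R Nx Ny Nz) :
  0 < X -> 0 < Y -> 0 < Z -> (0 < Nx)%N -> (0 < Ny)%N -> (0 < Nz)%N ->
  0 < L1 -> L4 ^+ 2 / (2 * L1) <= kappa2 ->
  ip_h X Y Z (L_h X Y Z L1 L4 kappa2 Q) Q <= 0.
Proof.
move=> hX hY hZ nx ny nz hL1 hk.
have hh : 0 <= hx X Nx * hy Y Ny * hz Z Nz.
  by rewrite /hx /hy /hz !mulr_ge0 ?divr_ge0 ?mulr_ge0 ?ler0n // ltW.
rewrite /ip_h; apply: mulr_ge0_le0 => //.
set N := ((Nx * Ny * Nz)%N%:R : R).
have hN : 0 < N by rewrite ltr0n !muln_gt0 nx ny nz.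
have E : \sum_p frob (L_h X Y Z L1 L4 kappa2 Q p) (Q p) =
  L1 * (\sum_p \sum_i \sum_j lap_h X Y Z Q p i j * Q p i j)
  + (- (L4 / 2)) * ((\sum_p \sum_i \sum_j curl_h X Y Z Q p i j * Q p i j)
                  + (\sum_p \sum_i \sum_j curl_h X Y Z Q p j i * Q p i j))
  + (- kappa2) * (\sum_p \sum_i \sum_j Q p i j * Q p i j).
  rewrite add3 !scal3 !add3; apply: eq_bigr => p _; apply: eq_bigr => i _; apply: eq_bigr => j _.
  rewrite /frob /L_h /C_h !mxE; ring.
rewrite E /lap_h /curl_h.
rewrite (fmult_ip _ _ _ _ Q (fun i j => i) (fun i j => j)).
rewrite (fmult_ip _ _ _ _ Q (fun i j => i) (fun i j => j)).
rewrite (fmult_ip _ _ _ _ Q (fun i j => j) (fun i j => i)) /=.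
rewrite combine.
set D := \sum_p \sum_i \sum_j Q p i j * Q p i j.
set S := \sum_q _.
have key : S <= kappa2 * (N * D).
  rewrite /D -(parseval3 Q hX hY hZ nx ny nz) mulr_sumr; apply: ler_sum => q _.
  rewrite lapT.
  rewrite curlT dot3_sq.
  have := mode_bound (wvec X Y Z q) (CM X Y Z Q q) (SM X Y Z Q q) hL1 hk.
  lra.
have hD : N^-1 * S <= kappa2 * D.
  have hNi : 0 <= N^-1 by rewrite invr_ge0 ltW.
  have := ler_wpM2l hNi key.
  rewrite mulrCA mulKf ?gt_eqF //.
lra.
Qed.
Definition evQ (R : realType) (Nx Ny Nz : nat) (Q : gridfun R Nx Ny Nz)
  (s : (gidx Nx Ny Nz * 'I_3 * 'I_3)%type) : R := Q s.1.1 s.1.2 s.2.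

Definition islin (R : realType) (Nx Ny Nz : nat) (F : gridfun R Nx Ny Nz -> R) :=
  exists w : (gidx Nx Ny Nz * 'I_3 * 'I_3)%type -> R,
    forall Q, F Q = \sum_s w s * evQ Q s.

Lemma islin_ev (R : realType) (Nx Ny Nz : nat) p i j :
  islin (fun Q : gridfun R Nx Ny Nz => Q p i j).
Proof.
exists (fun s => (s == ((p, i), j))%:R) => Q.
rewrite (bigD1 ((p, i), j)) //= eqxx mul1r big1 ?addr0 //.
by move=> s /negPf ->; rewrite mul0r.
Qed.

Lemma islin_add (R : realType) (Nx Ny Nz : nat) (F G : gridfun R Nx Ny Nz -> R) :
  islin F -> islin G -> islin (fun Q => F Q + G Q).
Proof.
move=> [w hw] [w' hw']; exists (fun s => w s + w' s) => Q.
by rewrite hw hw' -big_split; apply: eq_bigr => s _; rewrite mulrDl.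
Qed.

Lemma islin_scale (R : realType) (Nx Ny Nz : nat) (c : R) (F : gridfun R Nx Ny Nz -> R) :
  islin F -> islin (fun Q => c * F Q).
Proof.
move=> [w hw]; exists (fun s => c * w s) => Q.
by rewrite hw mulr_sumr; apply: eq_bigr => s _; rewrite mulrA.
Qed.

Lemma islin_sum (R : realType) (Nx Ny Nz : nat) (I : finType)
  (F : I -> gridfun R Nx Ny Nz -> R) :
  (forall i, islin (F i)) -> islin (fun Q => \sum_i F i Q).
Proof.
move=> h; have [W hW] := choice h.
exists (fun s => \sum_i W i s) => Q.
under eq_bigr do rewrite hW.
rewrite exchange_big /=; apply: eq_bigr => s _; by rewrite mulr_suml.
Qed.

Lemma islin_ext (R : realType) (Nx Ny Nz : nat) (F G : gridfun R Nx Ny Nz -> R) :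
  (forall Q, F Q = G Q) -> islin F -> islin G.
Proof. by move=> e [w hw]; exists w => Q; rewrite -e hw. Qed.

Lemma islin_crm (R : realType) (Nx Ny Nz : nat) (k : 'I_3 -> R)
  (G : gridfun R Nx Ny Nz -> 'I_3 -> 'I_3 -> R) r c :
  (forall r c, islin (fun Q => G Q r c)) -> islin (fun Q => crm k (G Q) r c).
Proof.
move=> h; apply: (islin_ext (F := fun Q =>
  k (inord ((c + 1) %% 3)) * G Q r (inord ((c + 2) %% 3))
  + (- k (inord ((c + 2) %% 3))) * G Q r (inord ((c + 1) %% 3)))).
  by move=> Q; rewrite /crm /crow mulNr.
by apply: islin_add; apply: islin_scale.
Qed.

Lemma islin_CM (R : realType) (X Y Z : R) (Nx Ny Nz : nat) q r c :
  islin (fun Q : gridfun R Nx Ny Nz => CM X Y Z Q q r c).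
Proof.
apply: (islin_sum (F := fun p (Q : gridfun R Nx Ny Nz) => cos (theta X Y Z q p) * Q p r c)).
by move=> p; apply: islin_scale; apply: islin_ev.
Qed.

Lemma islin_SM (R : realType) (X Y Z : R) (Nx Ny Nz : nat) q r c :
  islin (fun Q : gridfun R Nx Ny Nz => SM X Y Z Q q r c).
Proof.
apply: (islin_sum (F := fun p (Q : gridfun R Nx Ny Nz) => sin (theta X Y Z q p) * Q p r c)).
by move=> p; apply: islin_scale; apply: islin_ev.
Qed.

Lemma lap_entry (R : realType) (X Y Z : R) (Nx Ny Nz : nat) (Q : gridfun R Nx Ny Nz) p i j :
  lap_h X Y Z Q p i j = ((Nx * Ny * Nz)%N%:R)^-1 * \sum_q
    (cos (theta X Y Z q p) * (- dot3 (wvec X Y Z q) (wvec X Y Z q) * CM X Y Z Q q i j)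
     + (- sin (theta X Y Z q p)) * (dot3 (wvec X Y Z q) (wvec X Y Z q) * SM X Y Z Q q i j)).
Proof.
rewrite /lap_h fmult_entry; congr (_ * _); apply: eq_bigr => q _.
rewrite lap_sym_Re lap_sym_Im dft_entry /= /CM /SM; ring.
Qed.

Lemma curl_entry (R : realType) (X Y Z : R) (Nx Ny Nz : nat) (Q : gridfun R Nx Ny Nz) p i j :
  curl_h X Y Z Q p i j = ((Nx * Ny * Nz)%N%:R)^-1 * \sum_q
    (cos (theta X Y Z q p) * crm (wvec X Y Z q) (SM X Y Z Q q) i j
     + (- sin (theta X Y Z q p)) * crm (wvec X Y Z q) (CM X Y Z Q q) i j).
Proof.
rewrite /curl_h fmult_entry; congr (_ * _); apply: eq_bigr => q _.
rewrite curl_sym_Re curl_sym_Im dft_Im dft_Re crmN; ring.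
Qed.

Lemma islin_L (R : realType) (X Y Z : R) (Nx Ny Nz : nat) (L1 L4 kappa2 : R) p i j :
  islin (fun Q : gridfun R Nx Ny Nz => L_h X Y Z L1 L4 kappa2 Q p i j).
Proof.
have hlap : forall p i j, islin (fun Q : gridfun R Nx Ny Nz => lap_h X Y Z Q p i j).
  move=> p' i' j'; apply: (islin_ext (F := fun Q => _ * _)); first by move=> Q; rewrite lap_entry.
  apply: islin_scale; apply: islin_sum => q.
  apply: islin_add; apply: islin_scale; apply: islin_scale; [apply: islin_CM|apply: islin_SM].
have hcurl : forall p i j, islin (fun Q : gridfun R Nx Ny Nz => curl_h X Y Z Q p i j).
  move=> p' i' j'; apply: (islin_ext (F := fun Q => _ * _)); first by move=> Q; rewrite curl_entry.
  apply: islin_scale; apply: islin_sum => q.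
  apply: islin_add; apply: islin_scale; apply: islin_crm => r c; [apply: islin_SM|apply: islin_CM].
apply: (islin_ext (F := fun Q => L1 * lap_h X Y Z Q p i j
   + (- (L4 / 2)) * (curl_h X Y Z Q p i j + curl_h X Y Z Q p j i)
   + (- kappa2) * Q p i j)).
  by move=> Q; rewrite /L_h /C_h !mxE; ring.
apply: islin_add; [apply: islin_add|]; apply: islin_scale => //; last exact: islin_ev.
exact: islin_add.
Qed.
Definition Av (R : realType) (T : finType) (a : T -> T -> R) (v : T -> R) : T -> R :=
  fun s => \sum_s' a s s' * v s'.

Definition cf (R : realType) (T : finType) (a : T -> T -> R) (v : T -> R) (s : T) (n : nat) : R :=
  iter n (Av a) v s / (n`!)%:R.

Definition nrm1 (R : realType) (T : finType) (v : T -> R) : R := \sum_s `|v s|.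

Lemma nrm1_ge0 (R : realType) (T : finType) (v : T -> R) : 0 <= nrm1 v.
Proof. by apply: sumr_ge0 => s _. Qed.

Lemma nrm1_entry (R : realType) (T : finType) (v : T -> R) s : `|v s| <= nrm1 v.
Proof.
rewrite /nrm1 (bigD1 s) //= lerDl; by apply: sumr_ge0 => s' _.
Qed.

Lemma nrm1_Av (R : realType) (T : finType) (a : T -> T -> R) (v : T -> R) :
  nrm1 (Av a v) <= (\sum_s \sum_s' `|a s s'|) * nrm1 v.
Proof.
rewrite /nrm1 /Av mulr_suml; apply: ler_sum => s _.
apply: (le_trans (ler_norm_sum _ _ _)).
rewrite mulr_suml; apply: ler_sum => s' _.
by rewrite normrM ler_wpM2l // nrm1_entry.
Qed.

Lemma nrm1_iter (R : realType) (T : finType) (a : T -> T -> R) (v : T -> R) n :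
  nrm1 (iter n (Av a) v) <= (\sum_s \sum_s' `|a s s'|) ^+ n * nrm1 v.
Proof.
have hM : 0 <= \sum_s \sum_s' `|a s s'| by apply: sumr_ge0 => s _; apply: sumr_ge0.
elim: n => [|n IH]; first by rewrite expr0 mul1r.
rewrite iterS (le_trans (nrm1_Av _ _)) // exprS -mulrA ler_wpM2l //.
Qed.

Lemma cf_diffs (R : realType) (T : finType) (a : T -> T -> R) (v : T -> R) s :
  pseries_diffs (cf a v s) = cf a (Av a v) s.
Proof.
apply: funext => n; rewrite /pseries_diffs /cf iterSr factS natrM.
have h1 : (n.+1%:R : R) != 0 by rewrite pnatr_eq0.
have h2 : ((n`!)%:R : R) != 0 by rewrite pnatr_eq0 -lt0n fact_gt0.
field; apply/andP; split; last by rewrite nat1r.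
by rewrite pnatr_eq0 -lt0n fact_gt0.
Qed.

Lemma cvg_cf (R : realType) (T : finType) (a : T -> T -> R) (v : T -> R) s (x : R) :
  cvgn (pseries (cf a v s) x).
Proof.
set M := \sum_s \sum_s' `|a s s'|.
have hM : 0 <= M by apply: sumr_ge0 => s' _; apply: sumr_ge0.
apply: normed_cvg.
apply: (@series_le_cvg _ _ (fun n => nrm1 v * exp_coeff (M * `|x|) n)).
- by move=> n; exact: normr_ge0.
- move=> n; apply: mulr_ge0; first exact: nrm1_ge0.
  rewrite /exp_coeff /=; apply: divr_ge0 => //; apply: exprn_ge0; exact: mulr_ge0.
- move=> n; rewrite /exp_coeff /= /cf normrM normrM normfV normrX exprMn.
  rewrite [`|(n`!)%:R|]ger0_norm // mulrAC mulrA [nrm1 v * _]mulrC.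
  apply: ler_wpM2r; first by rewrite invr_ge0.
  rewrite mulrAC ler_wpM2r ?exprn_ge0 //.
  apply: (le_trans (nrm1_entry _ s)); exact: nrm1_iter.
- rewrite (_ : (fun n => nrm1 v * exp_coeff (M * `|x|) n) = nrm1 v *: exp_coeff (M * `|x|)).
    exact/is_cvg_seriesZ/is_cvg_series_exp_coeff.
  by apply: funext.
Qed.

Lemma cf_lin (R : realType) (T : finType) (a : T -> T -> R) (v : T -> R) s n :
  cf a (Av a v) s n = \sum_s' a s s' * cf a v s' n.
Proof.
rewrite /cf -iterSr iterS /Av mulr_suml; apply: eq_bigr => s' _; by rewrite mulrA.
Qed.

Lemma uu_lin (R : realType) (T : finType) (a : T -> T -> R) (v : T -> R) s (x : R) :
  limn (pseries (cf a (Av a v) s) x) = \sum_s' a s s' * limn (pseries (cf a v s') x).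
Proof.
have E : pseries (cf a (Av a v) s) x = fun m => \sum_s' a s s' * pseries (cf a v s') x m.
  apply: funext => m; rewrite /pseries /series /=.
  under eq_bigr do rewrite cf_lin mulr_suml.
  rewrite exchange_big /=; apply: eq_bigr => s' _; rewrite mulr_sumr.
  by apply: eq_bigr => k _; rewrite mulrA.
rewrite E; apply: cvg_lim => //.
apply: (@cvg_big _ _ +%R 0 xpredT add_continuous _ _ _
  (fun s' m => a s s' * pseries (cf a v s') x m)) => // s' _.
apply: cvgMr; exact: cvg_cf.
Qed.

Lemma deriv_uu (R : realType) (T : finType) (a : T -> T -> R) (v : T -> R) s (x : R) :
  is_derive x 1 (fun y => limn (pseries (cf a v s) y)) (limn (pseries (cf a (Av a v) s) x)).
Proof.
rewrite -cf_diffs.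
apply: (@pseries_snd_diffs _ _ (`|x| + 1)).
- exact: cvg_cf.
- rewrite cf_diffs; exact: cvg_cf.
- rewrite !cf_diffs; exact: cvg_cf.
- by rewrite [ltRHS]ger0_norm ?addr_ge0 // ltrDl.
Qed.

Lemma is_derive_sumT (R : realType) (T : finType) (h : T -> R -> R) (dh : T -> R) (x : R) :
  (forall s, is_derive x 1 (h s) (dh s)) ->
  is_derive x 1 (fun y => \sum_s h s y) (\sum_s dh s).
Proof.
move=> H; rewrite -fct_sumE.
elim/big_ind2: _ => //; first exact: is_derive_cst.
by move=> f1 d1 f2 d2 h1 h2; apply: is_deriveD.
Qed.

Lemma is_derive_sq (R : realType) (g : R -> R) (x dg : R) :
  is_derive x 1 g dg -> is_derive x 1 (fun y => g y ^+ 2) (2 * g x * dg).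
Proof.
move=> H; have H2 := is_deriveM H H.
have -> : (fun y => g y ^+ 2) = g * g by apply: funext => y; rewrite expr2.
apply: (is_derive_eq H2).
by rewrite /GRing.scale /= mulr2n; ring.
Qed.

Lemma pseries_at0 (R : realType) (c : R ^nat) : limn (pseries c 0) = c 0%N.
Proof.
apply: lim_near_cst => //; near=> m.
rewrite -[m]prednK; last by near: m.
rewrite /pseries /series /= big_nat_recl //= expr0 mulr1 big1 ?addr0 //.
by move=> i _; rewrite expr0n /= mulr0.
Unshelve. all: by end_near.
Qed.

Lemma energy_dec (R : realType) (T : finType) (a : T -> T -> R) (v : T -> R) (t : R) :
  (forall w : T -> R, \sum_s Av a w s * w s <= 0) -> 0 <= t ->
  \sum_s (limn (pseries (cf a v s) t)) ^+ 2 <= \sum_s v s ^+ 2.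
Proof.
move=> diss ht.
pose u y s := limn (pseries (cf a v s) y).
pose f y := \sum_s u y s ^+ 2.
have df : forall y : R, is_derive y (1 : R) f (2 * \sum_s Av a (u y) s * u y s).
  move=> y; apply: is_derive_eq.
    apply: (is_derive_sumT (h := fun s y => u y s ^+ 2)) => s.
    apply: is_derive_sq; exact: deriv_uu.
  rewrite mulr_sumr; apply: eq_bigr => s _; rewrite uu_lin /Av; ring.
have f0 : f 0 = \sum_s v s ^+ 2.
  rewrite /f /u; apply: eq_bigr => s _; by rewrite pseries_at0 /cf /= divr1.
rewrite -f0 -/(f t).
have dfle : forall x : R, (f^`())%classic x <= 0.
  move=> x; rewrite derive1E derive_val; apply: mulr_ge0_le0 => //; exact: diss.
have der : forall x : R, derivable f x 1 by move=> x; exact: ex_derive.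
have cont : {within `[0, t], continuous f}%classic.
  by apply: derivable_within_continuous => x _; exact: der.
have := @ler0_derive1_le_cc R f 0 t (fun x _ => der x) (fun x _ => dfle x) cont t 0.
rewrite !in_itv /= lexx ht /= lexx => /(_ isT isT isT) //.
Qed.

Lemma sumT (R : realType) (Nx Ny Nz : nat) (F : (gidx Nx Ny Nz * 'I_3 * 'I_3)%type -> R) :
  \sum_s F s = \sum_p \sum_(i < 3) \sum_(j < 3) F ((p, i), j).
Proof.
transitivity (\sum_(s : (gidx Nx Ny Nz * 'I_3 * 'I_3)%type) F ((s.1.1, s.1.2), s.2)).
  by apply: eq_bigr => -[[p i] j].
rewrite -(pair_bigA _ (fun x j => F ((x.1, x.2), j))) /=.
by rewrite -(pair_bigA _ (fun p i => \sum_(j < 3) F ((p, i), j))) /=.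
Qed.

Lemma hpos (R : realType) (X Y Z : R) (Nx Ny Nz : nat) :
  0 < X -> 0 < Y -> 0 < Z -> (0 < Nx)%N -> (0 < Ny)%N -> (0 < Nz)%N ->
  0 < hx X Nx * hy Y Ny * hz Z Nz.
Proof.
move=> hX hY hZ nx ny nz.
have h1 : 0 < hx X Nx by rewrite /hx divr_gt0 ?mulr_gt0 ?ltr0n.
have h2 : 0 < hy Y Ny by rewrite /hy divr_gt0 ?mulr_gt0 ?ltr0n.
have h3 : 0 < hz Z Nz by rewrite /hz divr_gt0 ?mulr_gt0 ?ltr0n.
by apply: mulr_gt0 => //; apply: mulr_gt0.
Qed.

Lemma ip_evQ (R : realType) (X Y Z : R) (Nx Ny Nz : nat) (M N : gridfun R Nx Ny Nz) :
  ip_h X Y Z M N = hx X Nx * hy Y Ny * hz Z Nz * \sum_s evQ M s * evQ N s.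
Proof. by rewrite /ip_h sumT. Qed.

Lemma part2 (R : realType) (X Y Z : R) (Nx Ny Nz : nat)
  (A : gridfun R Nx Ny Nz -> gridfun R Nx Ny Nz) (t : R) (Q : gridfun R Nx Ny Nz) :
  0 < X -> 0 < Y -> 0 < Z -> (0 < Nx)%N -> (0 < Ny)%N -> (0 < Nz)%N ->
  (forall s, islin (fun Q => evQ (A Q) s)) ->
  (forall Q, ip_h X Y Z (A Q) Q <= 0) -> 0 <= t ->
  norm_h X Y Z (op_exp A t Q) <= norm_h X Y Z Q.
Proof.
move=> hX hY hZ nx ny nz hlin hdiss ht.
have hh := hpos hX hY hZ nx ny nz.
have [a ha] := choice hlin.
have Aev : forall W, evQ (A W) = Av a (evQ W).
  by move=> W; apply: funext => s; rewrite ha.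
have itev : forall n W, evQ (iter n A W) = iter n (Av a) (evQ W).
  by move=> n W; elim: n => [|n IH] //; rewrite !iterS Aev IH.
have diss : forall w, \sum_s Av a w s * w s <= 0.
  move=> w.
  pose Qw : gridfun R Nx Ny Nz := fun p => \matrix_(i, j) w ((p, i), j).
  have ew : evQ Qw = w by apply: funext => -[[p i] j]; rewrite /evQ /Qw mxE.
  have := hdiss Qw; rewrite ip_evQ pmulr_rle0 // Aev ew //.
have eop : forall s, evQ (op_exp A t Q) s = limn (pseries (cf a (evQ Q) s) t).
  move=> [[p i] j]; rewrite /evQ /op_exp mxE /=.
  suff -> : (fun m : nat => \sum_(0 <= n < m) t ^+ n / n`!%:R * iter n A Q p i j) =
    pseries (cf a (evQ Q) ((p, i), j)) t by [].
  apply: funext => m; rewrite /pseries /series /=.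
  apply: eq_bigr => n _; rewrite /cf -itev /evQ /=; ring.
rewrite /norm_h !ip_evQ ler_sqrt; last by apply: mulr_ge0; [exact: ltW | apply: sumr_ge0 => s _; rewrite -expr2 sqr_ge0].
rewrite ler_pM2l //.
under eq_bigr do rewrite eop -expr2.
under [X in _ <= X]eq_bigr do rewrite -expr2.
exact: energy_dec.
Qed.

Unset Implicit Arguments.
Local Close Scope complex_scope.
Local Open Scope ring_scope.

Theorem lemma4p1 (R : realType) (X Y Z : R) (Nx Ny Nz : nat) (L1 L4 kappa2 : R) :
  0 < X -> 0 < Y -> 0 < Z ->
  (0 < Nx)%N -> ~~ odd Nx -> (0 < Ny)%N -> ~~ odd Ny -> (0 < Nz)%N -> ~~ odd Nz ->
  0 < L1 -> L4 ^+ 2 / (2 * L1) <= kappa2 ->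
  (forall Q : gridfun R Nx Ny Nz,
      ip_h X Y Z (L_h X Y Z L1 L4 kappa2 Q) Q <= 0) /\
  (forall (t : R) (Q : gridfun R Nx Ny Nz), 0 <= t ->
      norm_h X Y Z (op_exp (L_h X Y Z L1 L4 kappa2) t Q) <= norm_h X Y Z Q).
Proof.
move=> hX hY hZ nx _ ny _ nz _ hL1 hk.
have P1 : forall Q : gridfun R Nx Ny Nz, ip_h X Y Z (L_h X Y Z L1 L4 kappa2 Q) Q <= 0.
  by move=> Q; apply: part1.
split => // t Q ht.
apply: part2 => //.
by move=> [[p i] j]; exact: islin_L.
Qed.
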